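(* For every trie $\mathcal T$ with $n$ nodes over an alphabet of size $\sigma$ and every integer $k\ge0$, the number $r$ of XBWT runs of $\mathcal T$ satisfies $r\le n\mathcal H_k(\mathcal T)+\sigma^{k+1}$.
   Context: A trie over a finite totally ordered alphabet $\Sigma$ is a rooted ordered tree with edges labeled by symbols of $\Sigma$ such that edges leaving the same node have distinct labels and siblings are ordered by their incoming labels. For node $u$: $out(u)$ is the set of labels of edges leaving $u$; $\lambda(u)$ is the label of the edge entering $u$, with $\lambda(\text{root})=\#\notin\Sigma$; $\pi(u)$ the parent, $\pi(\text{root})=\text{root}$; $\lambda_0(u)=\epsilon$, $\lambda_k(u)=\lambda_{k-1}(\pi(u))\cdot\lambda(u)$; $n_w=|\{u:\lambda_k(u)=w\}|$, $n_{w,c}=|\{u:\lambda_k(u)=w,\ c\in out(u)\}|$. Logs base 2, $0\log(x/0)=0$. $\mathcal H_k(\mathcal T)=\sum_{w}\sum_{c\in\Sigma}\left[\frac{n_{w,c}}{n}\log\frac{n_w}{n_{w,c}}+\frac{n_w-n_{w,c}}{n}\log\frac{n_w}{n_w-n_{w,c}}\right]$ over contexts $w$ with $n_w>0$. Let $u_1,\dots,u_n$ be the nodes sorted co-lexicographically (right-to-left comparison, $\epsilon$ smallest) by the root-to-node path label. An index $i\in[n]$ is a $c$-run break if $c\in out(u_i)$ and either $i=n$ or $c\notin out(u_{i+1})$; $r=\sum_{c\in\Sigma}r_c$ where $r_c$ is the number of $c$-run breaks. *)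

(* Defs.v *)
From mathcomp Require Import all_boot all_order all_algebra.
From mathcomp Require Import reals exp.
Set Implicit Arguments. Unset Strict Implicit. Unset Printing Implicit Defensive.
Import Order.TTheory GRing.Theory Num.Theory.

Section Trie.
Variable sigma : nat.
Local Notation word := (seq 'I_sigma).

(* A trie is represented by the duplicate-free list of its nodes, each node
   identified with its root-to-node path label (a word over Sigma).  Children of a node have
   distinct labels automatically, and siblings are ordered by labels. *)
Definition is_trie (T : seq word) : bool :=
  [&& [::] \in T, uniq T &
      all (fun u => (u == [::]) || (take (size u).-1 u \in T)) T].

Definition in_out (T : seq word) (u : word) (c : 'I_sigma) : bool :=
  rcons u c \in T.

(* lambda_k(u): the last k labels on the path to u, padded with # (None)
   at the root, since lambda(root) = # and pi(root) = root. *)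
Definition ctx (k : nat) (u : word) : seq (option 'I_sigma) :=
  drop (size u) (nseq k None ++ map Some u).

Definition n_ctx (T : seq word) k w : nat := count (fun u => ctx k u == w) T.
Definition n_ctx_c (T : seq word) k w c : nat :=
  count (fun u => (ctx k u == w) && in_out T u c) T.

Fixpoint lexle (s t : seq nat) : bool :=
  match s, t with
  | [::], _ => true
  | _ :: _, [::] => false
  | x :: s', y :: t' => (x < y) || ((x == y) && lexle s' t')
  end.

Definition colex_le (u v : word) : bool :=
  lexle (rev (map val u)) (rev (map val v)).

Definition colex_nodes (T : seq word) : seq word := sort colex_le T.

Definition run_break (T : seq word) (c : 'I_sigma) (i : nat) : bool :=
  let s := colex_nodes T in
  in_out T (nth [::] s i) c &&
  ((i.+1 == size T) || ~~ in_out T (nth [::] s i.+1) c).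

Definition xbwt_runs (T : seq word) : nat :=
  \sum_(c < sigma) \sum_(i < size T) run_break T c i.

Definition log2 {R : realType} (x : R) : R := ln x / ln 2.

Local Open Scope ring_scope.

(* a/n * log(b/a), with the convention 0 log(x/0) = 0 *)
Definition xlog {R : realType} (n a b : nat) : R :=
  if a == 0%N then 0 else a%:R / n%:R * log2 (b%:R / a%:R).

(* k-th order empirical entropy H_k(T); the sum ranges over the contexts w
   with n_w > 0, i.e. those occurring as lambda_k(u) for some node u. *)
Definition Hk {R : realType} (T : seq word) (k : nat) : R :=
  \sum_(w <- undup [seq ctx k u | u <- T])
    \sum_(c < sigma)
      (xlog (size T) (n_ctx_c T k w c) (n_ctx T k w) +
       xlog (size T) (n_ctx T k w - n_ctx_c T k w c) (n_ctx T k w)).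

End Trie.

(* Main.v *)
Require Import Defs.
From mathcomp Require Import all_boot all_order all_algebra.
From mathcomp Require Import reals exp.
From mathcomp Require Import lra zify.
Import Order.TTheory GRing.Theory Num.Theory.
Set Implicit Arguments. Unset Strict Implicit. Unset Printing Implicit Defensive.

Section Real.
Local Open Scope ring_scope.
Variable R : realType.

Lemma bern (x : R) (m : nat) : 0 <= x -> 1 + m%:R * x <= (1 + x) ^+ m.
Proof.
move=> x0; elim: m => [|m IH]; first by rewrite mul0r addr0 expr0.
rewrite exprS.
have h : 0 <= m%:R * x * x by apply: mulr_ge0 => //; apply: mulr_ge0.
apply: (le_trans _ (ler_wpM2l _ IH)); last by lra.
rewrite -natr1; nra.
Qed.

Lemma ln2_gt0 : 0 < ln (2 : R).
Proof. by apply: ln_gt0; rewrite ltr1n. Qed.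

Lemma L2 (t : nat) : (0 < t)%N -> ln (2 : R) <= t%:R * ln ((t + 1)%N%:R / t%:R).
Proof.
move=> t0.
have tp : 0 < (t%:R : R) by rewrite ltr0n.
have e : (t + 1)%N%:R / t%:R = 1 + t%:R^-1 :> R.
  by rewrite natrD mulrDl divff ?gt_eqF // mul1r addrC.
have ip : 0 <= (t%:R : R)^-1 by rewrite invr_ge0 ltW.
rewrite e mulr_natl -lnXn; last by lra.
rewrite ler_ln ?posrE; last 2 first.
- by [].
- by apply: exprn_gt0; lra.
apply: le_trans (bern t ip).
by rewrite divff ?gt_eqF.
Qed.

Lemma L3 (t s : nat) : (0 < t)%N -> (0 < s)%N -> ln (2 : R) <= t%:R * ln ((t + s)%N%:R / t%:R).
Proof.
move=> t0 s0; apply: le_trans (L2 t0) _.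
have tp : 0 < (t%:R : R) by rewrite ltr0n.
apply: ler_wpM2l; first exact: ltW.
rewrite ler_ln ?posrE; last 2 first.
- by apply: divr_gt0; rewrite ltr0n ?addn_gt0 ?t0.
- by apply: divr_gt0; rewrite ltr0n ?addn_gt0 ?t0.
by rewrite ler_pM2r ?invr_gt0 // ler_nat leq_add2l.
Qed.

Lemma L4 (t s : nat) : (0 < t)%N -> (t <= s)%N -> t%:R * ln (2 : R) <= t%:R * ln ((t + s)%N%:R / t%:R).
Proof.
move=> t0 ts.
have tp : 0 < (t%:R : R) by rewrite ltr0n.
apply: ler_wpM2l; first exact: ltW.
rewrite ler_ln ?posrE; last 2 first.
- by [].
- by apply: divr_gt0; rewrite ltr0n ?addn_gt0 ?t0.
rewrite ler_pdivlMr // -natrM ler_nat; lia.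
Qed.

Lemma ent_bound (a0 b0 r : nat) : (0 < a0)%N -> (a0 < b0)%N -> (r <= a0)%N -> (r <= b0 - a0 + 1)%N ->
  r%:R <= a0%:R * log2 (b0%:R / a0%:R) + (b0 - a0)%N%:R * log2 (b0%:R / (b0 - a0)%N%:R) :> R.
Proof.
move=> a00 ab ra rb.
have l2 := ln2_gt0.
rewrite /log2 !mulrA -mulrDl ler_pdivlMr //.
have -> : b0 = (a0 + (b0 - a0))%N by lia.
rewrite addKn.
set y := (b0 - a0)%N in rb *.
have y0 : (0 < y)%N by rewrite /y; lia.
have -> : (a0 + y)%N = (y + a0)%N :> nat by rewrite addnC.
case: (leqP a0 y) => h.
- have h1 := L4 a00 h; have h2 := L3 y0 a00.
  rewrite addnC in h1.
  have : (r%:R : R) <= a0%:R + 1 by rewrite natr1 ler_nat; lia.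
  move=> h3; nra.
- have h1 := L4 y0 (ltnW h); have h2 := L3 a00 y0.
  rewrite addnC in h2.
  have : (r%:R : R) <= y%:R + 1 by rewrite natr1 ler_nat; lia.
  move=> h3; nra.
Qed.

Lemma xlog_ge0 (nn a0 b0 : nat) : (a0 <= b0)%N -> 0 <= xlog nn a0 b0 :> R.
Proof.
move=> ab; rewrite /xlog; case: eqP => // a0n.
have a0p : 0 < (a0%:R : R) by rewrite ltr0n lt0n; apply/eqP.
apply: mulr_ge0; first by apply: divr_ge0.
rewrite /log2; apply: divr_ge0; last exact: ltW ln2_gt0.
apply: ln_ge0; rewrite ler_pdivlMr // mul1r ler_nat //.
Qed.

Lemma nxlog (nn a0 b0 : nat) : (0 < nn)%N -> (0 < a0)%N ->
  nn%:R * xlog nn a0 b0 = a0%:R * log2 (b0%:R / a0%:R) :> R.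
Proof.
move=> n0 a00; rewrite /xlog (negbTE (lt0n_neq0 a00)).
by rewrite mulrA; congr (_ * _); rewrite mulrC -mulrA mulVf ?mulr1 // pnatr_eq0 -lt0n n0.
Qed.

Lemma wc_bound (nn a0 b0 r : nat) : (0 < nn)%N -> (a0 <= b0)%N -> (r <= a0)%N -> (r <= b0 - a0 + 1)%N ->
  r%:R <= nn%:R * (xlog nn a0 b0 + xlog nn (b0 - a0)%N b0) + ((a0 == b0) * r)%:R :> R.
Proof.
move=> n0 ab ra rb.
have e0 : 0 <= nn%:R * (xlog nn a0 b0 + xlog nn (b0 - a0)%N b0) :> R.
  by apply: mulr_ge0 => //; apply: addr_ge0; apply: xlog_ge0 => //; apply: leq_subr.
case: (a0 =P b0) => [_|ne]; first by rewrite /= mul1n lerDr.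
rewrite /= mul0n addr0.
case: (posnP a0) => [a00|a00].
  by move: ra; rewrite {1}a00 leqn0 => /eqP ->; exact: e0.
have ab' : (a0 < b0)%N by rewrite ltn_neqAle ab andbT; apply/eqP.
rewrite mulrDr !nxlog //; last by rewrite subn_gt0.
exact: ent_bound.
Qed.
End Real.

Lemma lexle_refl : reflexive lexle.
Proof. by elim=> //= x s ->; rewrite eqxx orbT. Qed.

Lemma lexle_trans : transitive lexle.
Proof.
move=> y x z; elim: x y z => [|a x IH] [|b y] [|c z] //=.
case/orP=> [ab|/andP[/eqP <- xy]]; case/orP=> [bc|/andP[/eqP <- yz]].
- by rewrite (ltn_trans ab bc).
- by rewrite ab.
- by rewrite bc.
- by rewrite eqxx (IH _ _ xy yz) orbT.
Qed.

Lemma lexle_total : total lexle.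
Proof.
elim=> [|a x IH] y; first by [].
case: y => [|b y] //=.
by case: (ltngtP a b) => //= _; exact: IH.
Qed.

Lemma lexle_anti x y : lexle x y -> lexle y x -> x = y.
Proof.
elim: x y => [|a x IH] [|b y] //=.
case/orP=> [ab|/andP[/eqP <- xy]]; case/orP=> [ba|/andP[/eqP ba yx]].
- by move: (ltn_trans ab ba); rewrite ltnn.
- by move: ab; rewrite ba ltnn.
- by move: ba; rewrite ltnn.
- by rewrite (IH _ xy yx).
Qed.

Lemma lexle_take k x y z : lexle x y -> lexle y z -> k <= size x -> k <= size z ->
  take k x = take k z -> k <= size y /\ take k y = take k x.
Proof.
elim: k x y z => [|k IH] x y z; first by rewrite !take0.
case: x => [|a x] //; case: z => [|c z] //; case: y => [|b y] //= H1 H2 s1 s2 [ac tk].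
subst c.
case/orP: H1 => [ab|/andP[/eqP ab xy]]; case/orP: H2 => [ba|/andP[/eqP ba yz]].
- by move: (ltn_trans ab ba); rewrite ltnn.
- by move: ab; rewrite ba ltnn.
- by move: ba; rewrite ab ltnn.
- subst b. have [h1 h2] := IH _ _ _ xy yz s1 s2 tk. by rewrite h2.
Qed.

Section Ctx.
Variable sigma : nat.
Local Notation word := (seq 'I_sigma).

Lemma pmap_ctx k (u : word) : pmap id (ctx k u) = drop (size u - k) u.
Proof.
have pS : forall l : word, pmap id (map Some l) = l.
  by elim=> //= a l ->.
rewrite /ctx drop_cat size_nseq.
case: ltnP => h.
  rewrite pmap_cat drop_nseq pS.
  have -> : size u - k = 0 by lia.
  rewrite drop0; by elim: (k - size u).
have -> : drop (size u - k) (map Some u) = map Some (drop (size u - k) u) by rewrite map_drop.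
by rewrite pS.
Qed.

Lemma ctx_eq k (u v : word) : ctx k u = ctx k v ->
  u = v \/ [/\ k <= size u, k <= size v & drop (size u - k) u = drop (size v - k) v].
Proof.
move=> e; have := congr1 (pmap id) e; rewrite !pmap_ctx => d.
case: (leqP k (size u)) => hu; case: (leqP k (size v)) => hv.
- by right.
- have := congr1 size d; rewrite !size_drop; lia.
- have := congr1 size d; rewrite !size_drop; lia.
- left; move: d; have -> : size u - k = 0 by lia.
  have -> : size v - k = 0 by lia.
  by rewrite !drop0.
Qed.

Lemma ctx_drop k (u : word) : k <= size u -> ctx k u = map Some (drop (size u - k) u).
Proof.
move=> h; rewrite /ctx drop_cat size_nseq.
case: ltnP => h'; first lia.
by rewrite map_drop; congr drop; lia.
Qed.

Lemma colex_le_trans : transitive (@colex_le sigma).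
Proof. move=> y x z; rewrite /colex_le; exact: lexle_trans. Qed.

Lemma colex_le_total : total (@colex_le sigma).
Proof. move=> x y; rewrite /colex_le; exact: lexle_total. Qed.

Lemma colex_le_anti (x y : word) : colex_le x y -> colex_le y x -> x = y.
Proof.
rewrite /colex_le => h1 h2; have := lexle_anti h1 h2.
move/(congr1 rev); rewrite !revK => /inj_map; apply; exact: val_inj.
Qed.

Lemma colex_interval k (x y z : word) : colex_le x y -> colex_le y z ->
  ctx k x = ctx k z -> ctx k y = ctx k x.
Proof.
move=> xy yz /ctx_eq [exz|[hx hz e]].
  subst z.
  by rewrite (colex_le_anti xy yz).
move: xy yz; rewrite /colex_le => xy yz.
have := @lexle_take k _ _ _ xy yz.
rewrite !size_rev !size_map !take_rev !size_map -!map_drop e => /(_ hx hz erefl) [hy ey].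
move/(congr1 rev): ey; rewrite !revK => ey.
rewrite (ctx_drop hx) (ctx_drop hy).
have -> : drop (size y - k) y = drop (size x - k) x.
  apply: (@inj_map _ _ val); first exact: val_inj.
  by rewrite ey e.
done.
Qed.

End Ctx.

Lemma sum_le1 n (Q : nat -> bool) :
  (forall i j, i < j < n -> Q i -> Q j -> False) -> \sum_(i < n) Q i <= 1.
Proof.
elim: n => [|n IH] H; first by rewrite big_ord0.
rewrite big_ord_recr /=.
case Qn: (Q n).
  rewrite big1 // => i _; apply/eqP; rewrite eqb0; apply/negP => Qi.
  by apply: (H i n) => //; rewrite ltn_ord /=.
rewrite addn0; apply: IH => i j /andP[ij jn]; apply: H; rewrite ij /=; lia.
Qed.

Lemma sum_shift n (F : nat -> nat) :
  \sum_(i < n) ((i.+1 < n) * F i.+1) <= \sum_(i < n) F i.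
Proof.
case: n => [|n]; first by rewrite !big_ord0.
rewrite big_ord_recr big_ord_recl /= ltnn mul0n addn0.
rewrite (eq_bigr (fun i : 'I_n => F i.+1)); first exact: leq_addl.
by move=> i _; rewrite ltnS ltn_ord mul1n.
Qed.

Section Main.
Variable sigma : nat.
Local Notation word := (seq 'I_sigma).
Variable T : seq word.
Variable k : nat.
Hypothesis HT : is_trie T.

Let s := colex_nodes T.
Let n := size T.
Let P i := nth [::] s i.
Let cx i := ctx k (P i).
Let out i c := in_out T (P i) c.
Let W := undup [seq ctx k u | u <- T].

Lemma size_s : size s = n.
Proof. by rewrite /s /colex_nodes size_sort. Qed.

Lemma perm_s : perm_eq s T.
Proof. by rewrite /s /colex_nodes perm_sort. Qed.

Lemma sorted_s : sorted (@colex_le sigma) s.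
Proof. apply: sort_sorted; exact: colex_le_total. Qed.

Lemma P_in i : i < n -> P i \in T.
Proof. by move=> h; rewrite -(perm_mem perm_s) mem_nth // size_s. Qed.

Lemma cx_in i : i < n -> cx i \in W.
Proof. by move=> h; rewrite mem_undup; apply: map_f; exact: P_in. Qed.

Lemma uniq_W : uniq W.
Proof. exact: undup_uniq. Qed.

Lemma contig i j l : i < j -> j < l -> l < n -> cx i = cx l -> cx j = cx i.
Proof.
move=> ij jl ln e.
have st := sorted_ltn_nth (@colex_le_trans sigma) [::] sorted_s.
have hi : i \in [pred m | m < size s] by rewrite inE size_s; lia.
have hj : j \in [pred m | m < size s] by rewrite inE size_s; lia.
have hl : l \in [pred m | m < size s] by rewrite inE size_s; lia.
exact: (colex_interval (st _ _ hi hj ij) (st _ _ hj hl jl) e).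
Qed.

Definition blocklast i := (i.+1 == n) || (cx i.+1 != cx i).

Lemma last_unique i j : i < j -> j < n -> blocklast i -> cx j != cx i.
Proof.
move=> ij jn; rewrite /blocklast; case/orP=> [/eqP|h]; first lia.
apply/eqP=> e.
case: (ltngtP i.+1 j) => h2.
- by move: h; rewrite (contig (ltnSn i) h2 jn (esym e)) eqxx.
- lia.
- by move: h; rewrite h2 e eqxx.
Qed.

Lemma first_unique i j : i < j -> j.+1 < n -> cx i.+1 != cx i -> cx j.+1 != cx j ->
  cx i.+1 != cx j.+1.
Proof.
move=> ij jn hi hj; apply/eqP=> e.
case: (ltngtP i.+1 j) => h2.
- have := contig h2 (ltnSn j) jn e; move=> e2.
  by move: hj; rewrite e2 e eqxx.
- lia.
- by subst j; move: hj; rewrite e eqxx.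
Qed.

Lemma cnt_pos (p : pred word) : count p T = \sum_(i < n) p (P i).
Proof.
rewrite -(count_sort (@colex_le sigma)) -/(colex_nodes T) -/s -sum1_count.
rewrite (big_nth [::]) size_s big_mkord big_mkcond /=.
by apply: eq_bigr => i _; rewrite /P; case: (p _).
Qed.

Lemma regroup (f : nat -> nat) :
  \sum_(i < n) f i = \sum_(w <- W) \sum_(i < n) (cx i == w) * f i.
Proof.
rewrite exchange_big /=; apply: eq_bigr => i _.
rewrite (bigD1_seq (cx i)) ?cx_in ?uniq_W //= eqxx mul1n big1_seq ?addn0 //.
by move=> w /andP[hw _]; rewrite eq_sym (negbTE hw).
Qed.

Let a w c := n_ctx_c T k w c.
Let b w := n_ctx T k w.
Let brk c i := run_break T c i.

Lemma brkE c i : brk c i = out i c && ((i.+1 == n) || ~~ out i.+1 c).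
Proof. by []. Qed.

Lemma aE w c : a w c = \sum_(i < n) ((cx i == w) && out i c).
Proof. by rewrite /a /n_ctx_c cnt_pos. Qed.

Lemma bE w : b w = \sum_(i < n) (cx i == w).
Proof. by rewrite /b /n_ctx cnt_pos. Qed.

Lemma b_split w c : b w = a w c + \sum_(i < n) ((cx i == w) && ~~ out i c).
Proof.
rewrite bE aE -big_split /=; apply: eq_bigr => i _.
by case: (cx i == w); case: (out i c).
Qed.

Lemma full_out w c i : a w c = b w -> i < n -> cx i = w -> out i c.
Proof.
move=> e hi hw; move: (b_split w c); rewrite -e -{1}(addn0 (a w c)) => /eqP.
rewrite eqn_add2l eq_sym sum_nat_eq0 => /forallP /(_ (Ordinal hi)) /=.
by rewrite hw eqxx /=; case: (out i c).
Qed.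

Definition br w c := \sum_(i < n) (cx i == w) * brk c i.

Lemma br_le_a w c : br w c <= a w c.
Proof.
rewrite /br aE; apply: leq_sum => i _; rewrite brkE.
by case: (cx i == w); rewrite ?mul0n ?mul1n //; case: (out i c); rewrite /= ?leq_b1.
Qed.

Lemma sum_iota (Q : nat -> bool) : \sum_(i < n) Q i = count Q (iota 0 n).
Proof.
have -> : iota 0 n = index_iota 0 n by rewrite /index_iota subn0.
rewrite -sum1_count big_mkcond big_mkord /=.
rewrite [RHS]big_mkcond; apply: eq_bigr => i _; by case: (Q i).
Qed.

Lemma br_le_b w c : br w c <= (b w - a w c) + 1.
Proof.
have -> : b w - a w c = \sum_(i < n) ((cx i == w) && ~~ out i c).
  by rewrite (b_split w c) addKn.
apply: (@leq_trans (\sum_(i < n) ((i.+1 < n) * ((cx i.+1 == w) && ~~ out i.+1 c))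
                     + \sum_(i < n) ((cx i == w) && blocklast i))).
  rewrite /br -big_split /=; apply: leq_sum => i _.
  rewrite brkE /blocklast.
  have hlt : (i.+1 < n) = ~~ (i.+1 == n) by move: (ltn_ord i); lia.
  rewrite hlt.
  case: (cx i =P w) => [hw|] /=; last by rewrite mul0n.
  rewrite hw.
  by case: (out i c); case: (i.+1 == n); case: (out i.+1 c); case: (cx i.+1 == w).
apply: leq_add; first exact: (sum_shift n (fun j => (cx j == w) && ~~ out j c)).
apply: (@sum_le1 n (fun i => (cx i == w) && blocklast i)) => i j /andP[ij jn] /andP[/eqP hi bi] /andP[/eqP hj _].
by move: (last_unique ij jn bi); rewrite hi hj eqxx.
Qed.

Lemma inj_count (Q : nat -> bool) (f : nat -> seq (option 'I_sigma)) (R : pred (seq (option 'I_sigma))) :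
  (forall i, i < n -> Q i -> f i \in W /\ R (f i)) ->
  (forall i j, i < j -> j < n -> Q i -> Q j -> f i != f j) ->
  \sum_(i < n) Q i <= count R W.
Proof.
move=> H1 H2; rewrite sum_iota -size_filter -(size_map f) -size_filter.
apply: uniq_leq_size.
  rewrite map_inj_in_uniq ?filter_uniq ?iota_uniq //.
  move=> x y; rewrite !mem_filter !mem_iota /= => /andP[qx hx] /andP[qy hy] e.
  case: (ltngtP x y) => // h.
  - by move: (H2 _ _ h hy qx qy); rewrite e eqxx.
  - by move: (H2 _ _ h hx qy qx); rewrite e eqxx.
move=> z /mapP[x]; rewrite mem_filter mem_iota /= => /andP[qx hx] ->.
have [h1 h2] := H1 x hx qx.
by rewrite mem_filter h1 h2.
Qed.

Definition fullb w c := a w c == b w.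

Definition C c := \sum_(i < n) (fullb (cx i) c && brk c i).

Lemma full_blocklast i c : i < n -> fullb (cx i) c -> brk c i -> blocklast i.
Proof.
move=> hi /eqP hf; rewrite brkE /blocklast => /andP[_ ho].
case: (i.+1 =P n) => [->|hn] /=; first by [].
have hi1 : i.+1 < n by move: hn hi; lia.
apply/negP => /eqP e; move: ho; rewrite (introF eqP hn) /=.
by rewrite (full_out hf hi1 e).
Qed.

Lemma C_le_full c : C c <= count (fun w => fullb w c) W.
Proof.
apply: (@inj_count (fun i => fullb (cx i) c && brk c i) cx (fun w => fullb w c)).
  by move=> i hi /andP[hf _]; split; [exact: cx_in|].
move=> i j ij jn /andP[hfi bi] /andP[_ _].
rewrite eq_sym; apply: last_unique => //.
apply: full_blocklast => //; lia.
Qed.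

Lemma sum_last m (g : nat -> bool) : \sum_(i < m) ((i.+1 == m) && g i) <= g m.-1.
Proof.
case: m => [|m]; first by rewrite big_ord0.
rewrite big_ord_recr /= eqxx /= big1 // => i _.
by rewrite eqSS (ltn_eqF (ltn_ord i)).
Qed.

Lemma C_le_nonfull c : C c <= count (fun w => ~~ fullb w c) W + out n.-1 c.
Proof.
apply: (@leq_trans (\sum_(i < n) ((fullb (cx i) c && brk c i) && (i.+1 < n))
                    + \sum_(i < n) ((i.+1 == n) && out i c))).
  rewrite /C -big_split /=; apply: leq_sum => i _.
  have : (i.+1 < n) = ~~ (i.+1 == n) by move: (ltn_ord i); lia.
  move=> ->; rewrite brkE.
  by case: (fullb (cx i) c); case: (out i c); case: (i.+1 == n); case: (out i.+1 c).
apply: leq_add; last exact: (sum_last n (fun i => out i c)).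
apply: (@inj_count (fun i => (fullb (cx i) c && brk c i) && (i.+1 < n)) (fun i => cx i.+1) (fun w => ~~ fullb w c)).
  move=> i hi /andP[/andP[hf bi] hi1]; split; first exact: cx_in.
  apply/negP => /eqP hf1.
  move: bi; rewrite brkE (ltn_eqF hi1) /= => /andP[_].
  by rewrite (full_out hf1 hi1 erefl).
move=> i j ij jn /andP[/andP[hfi bi] hi1] /andP[/andP[hfj bj] hj1].
have nf : forall l, l < n -> fullb (cx l) c -> brk c l -> l.+1 < n -> cx l.+1 != cx l.
  move=> l hl /eqP hfl bl hl1; apply/eqP => e.
  move: bl; rewrite brkE (ltn_eqF hl1) /= => /andP[_].
  by rewrite (full_out hfl hl1 e).
apply: first_unique => //; apply: nf => //; lia.
Qed.

Lemma C_regroup c : C c = \sum_(w <- W) fullb w c * br w c.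
Proof.
rewrite /C (regroup (fun i => fullb (cx i) c && brk c i)).
apply: eq_bigr => w _; rewrite /br big_distrr /=; apply: eq_bigr => i _.
by case: (cx i =P w) => [->|]; rewrite ?mul0n ?muln0 //= mul1n; case: (fullb w c); case: (brk c i).
Qed.

Lemma runs_regroup c : \sum_(i < n) brk c i = \sum_(w <- W) br w c.
Proof. exact: (regroup (fun i => brk c i)). Qed.

Lemma C_bound c : (C c).*2 <= size W + 1.
Proof.
rewrite -addnn; have h1 := C_le_full c; have h2 := C_le_nonfull c.
have h3 : count (fun w => fullb w c) W + count (fun w => ~~ fullb w c) W = size W.
  exact: count_predC.
have h4 : out n.-1 c <= 1 by case: (out _ _).
lia.
Qed.

Lemma ctx_dropK (u : word) : ctx k u = ctx k (drop (size u - k) u).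
Proof.
case: (leqP k (size u)) => h.
  rewrite (ctx_drop h) ctx_drop size_drop; last lia.
  by congr map; rewrite (_ : size u - (size u - k) - k = 0) ?drop0 //; lia.
by rewrite (_ : size u - k = 0) ?drop0 //; lia.
Qed.

Lemma size_W : size W <= \sum_(d < k.+1) sigma ^ d.
Proof.
pose L := flatten [seq [seq ctx k (tval t) | t <- enum {: d.-tuple 'I_sigma}] | d <- iota 0 k.+1].
have -> : \sum_(d < k.+1) sigma ^ d = size L.
  rewrite size_flatten /shape -map_comp sumnE big_map -(big_mkord xpredT (fun d => sigma ^ d)).
  rewrite /index_iota subn0; apply: eq_bigr => d _.
  by rewrite /= size_map -cardT card_tuple card_ord.
apply: uniq_leq_size; first exact: uniq_W.
move=> w; rewrite mem_undup => /mapP[u uT ->].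
rewrite ctx_dropK; apply/flatten_mapP.
set v := drop _ u.
have hv : size v <= k by rewrite size_drop; move: (size u) => m; lia.
exists (size v); first by rewrite mem_iota; lia.
have := @map_f _ _ (fun t : (size v).-tuple 'I_sigma => ctx k (tval t)) (enum {: (size v).-tuple 'I_sigma}) (Tuple (eqxx (size v))).
by rewrite mem_enum => /(_ isT).
Qed.

Lemma n_gt0 : 0 < n.
Proof. by case/and3P: HT => h _ _; rewrite /n; case: (T) h. Qed.

Lemma prefix_closed (u : word) j : u \in T -> take j u \in T.
Proof.
case/and3P: HT => rT _ /allP Hc.
elim: (size u) {-2}u (erefl (size u)) j => [|m IH] v sv j vT.
  by case: v sv vT => // _ _; rewrite take0.
case: (leqP (size v) j) => hj; first by rewrite take_oversize.
have := Hc _ vT; case/orP; first by move/eqP => e; rewrite e in sv.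
rewrite sv /= => pT.
have -> : take j v = take j (take m v) by rewrite -take_min; congr take; lia.
apply: IH => //; rewrite size_take_min sv; lia.
Qed.

Section One.
Hypothesis Hone : forall x y : 'I_sigma, x = y.

Lemma word_eq (u v : word) : size u = size v -> u = v.
Proof.
elim: u v => [|x u IH] [|y v] //= [e].
by rewrite (Hone x y) (IH _ e).
Qed.

Lemma leaf_unique (u v : word) c : u \in T -> v \in T -> ~~ in_out T u c -> ~~ in_out T v c -> u = v.
Proof.
have key : forall u v : word, u \in T -> v \in T -> ~~ in_out T u c -> size u < size v -> False.
  move=> x y xT yT hx hs.
  have := prefix_closed (size x).+1 yT.
  have -> : take (size x).+1 y = rcons x c.
    by apply: word_eq; rewrite size_take_min size_rcons; lia.
  by move: hx; rewrite /in_out => /negbTE ->.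
move=> uT vT hu hv; case: (ltngtP (size u) (size v)) => h.
- by case: (key _ _ uT vT hu h).
- by case: (key _ _ vT uT hv h).
- exact: word_eq.
Qed.

Lemma lexle_nseq a0 b0 (x : nat) : a0 <= b0 -> lexle (nseq a0 x) (nseq b0 x).
Proof.
elim: a0 b0 => [|a0 IH] [|b0] //= h.
by rewrite ltnn eqxx /= IH.
Qed.

Lemma colex_size (u v : word) : size u <= size v -> colex_le u v.
Proof.
move=> h; case: u h => [|x u] h; first by [].
have mv : forall w : word, map val w = nseq (size w) (val x).
  by elim=> //= y w ->; rewrite (Hone y x).
by rewrite /colex_le !mv !rev_nseq; apply: lexle_nseq.
Qed.

Lemma last_no_out c : ~~ out n.-1 c.
Proof.
apply/negP; rewrite /out /in_out => h.
have : rcons (P n.-1) c \in s by rewrite (perm_mem perm_s).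
move=> /(nthP [::]) [j]; rewrite size_s => jn ej.
have hn := n_gt0.
have refl : reflexive (@colex_le sigma) by move=> x; exact: lexle_refl.
have st := sorted_leq_nth (@colex_le_trans sigma) refl [::] sorted_s.
have h1 : colex_le (nth [::] s j) (nth [::] s n.-1).
  apply: st; rewrite ?inE ?size_s; lia.
rewrite ej in h1.
have h2 : colex_le (P n.-1) (rcons (P n.-1) c) by apply: colex_size; rewrite size_rcons.
have := colex_le_anti h1 h2; move/(congr1 size); rewrite size_rcons => e; exact: (n_Sn _ (esym e)).
Qed.
End One.

Lemma nonfull_witness w c : ~~ fullb w c -> exists i, [/\ i < n, cx i = w & ~~ out i c].
Proof.
move=> nf; have := b_split w c.
case E: (\sum_(i < n) ((cx i == w) && ~~ out i c)) => [|m] e.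
  by move: nf; rewrite /fullb e addn0 eqxx.
have : \sum_(i < n) ((cx i == w) && ~~ out i c) != 0 by rewrite E.
rewrite sum_nat_eq0 negb_forall => /existsP [i] /=.
case: (cx i =P w) => //= hw; case Ho: (out i c) => //= _.
by exists i; split => //; rewrite Ho.
Qed.

Lemma nonfull_le1 c : (forall x y : 'I_sigma, x = y) ->
  count (fun w => ~~ fullb w c) W <= 1.
Proof.
move=> Hone; rewrite -size_filter.
case E: (filter _ W) => [|w1 rest] //.
have hw : forall w, w \in filter (fun w => ~~ fullb w c) W -> w = w1.
  have : w1 \in filter (fun w => ~~ fullb w c) W by rewrite E mem_head.
  rewrite mem_filter => /andP[nf1 _] w; rewrite mem_filter => /andP[nf _].
  have [i1 [hi1 e1 o1]] := nonfull_witness nf1.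
  have [i [hi e o]] := nonfull_witness nf.
  rewrite -e -e1 /cx (@leaf_unique Hone (P i) (P i1) c) //; exact: P_in.
have u : uniq (w1 :: rest) by rewrite -E filter_uniq // uniq_W.
have := @uniq_leq_size _ (w1 :: rest) [:: w1] u.
apply=> x hx; rewrite inE; apply/eqP; apply: hw; by rewrite E.
Qed.

Lemma C_le1 c : (forall x y : 'I_sigma, x = y) -> C c <= 1.
Proof.
move=> Hone; have := C_le_nonfull c; rewrite (negbTE (last_no_out Hone c)) addn0.
move/leq_trans; apply; exact: nonfull_le1.
Qed.

Lemma geom_bound m : 2 <= m -> forall j, \sum_(d < j.+1) m ^ d + 1 <= 2 * m ^ j.
Proof.
move=> hm; elim=> [|j IH]; first by rewrite big_ord_recr big_ord0 /= expn0.
rewrite big_ord_recr /= expnS.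
have : 2 * m ^ j <= m * m ^ j by rewrite leq_mul2r hm orbT.
move: IH; move: (\sum_(i < j.+1) m ^ i) (m * m ^ j) (m ^ j) => S Z Y; lia.
Qed.

Lemma sumC : \sum_(c < sigma) C c <= sigma ^ k.+1.
Proof.
case: (leqP sigma 1) => hs.
  have Hone : forall x y : 'I_sigma, x = y.
    move=> x y; apply: val_inj; have := leq_trans (ltn_ord x) hs; have := leq_trans (ltn_ord y) hs; rewrite !ltnS !leqn0 => /eqP hy /eqP hx; by rewrite /= hx hy.
  apply: (@leq_trans (\sum_(c < sigma) 1)); first by apply: leq_sum => c _; exact: C_le1.
  rewrite sum_nat_const card_ord muln1.
  by case: (sigma) hs => [|[|]] //; rewrite exp1n.
apply: (@leq_trans (\sum_(c < sigma) sigma ^ k)).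
  apply: leq_sum => c _.
  have h1 := C_bound c; have h2 := size_W; have h3 := geom_bound hs k.
  rewrite -addnn in h1; lia.
by rewrite sum_nat_const card_ord expnS.
Qed.


Lemma final (R : realType) : (((xbwt_runs T)%:R : R) <= (size T)%:R * Hk T k + (sigma ^ k.+1)%:R)%R.
Proof.
rewrite /xbwt_runs.
have -> : (\sum_(c < sigma) \sum_(i < size T) run_break T c i)%N = (\sum_(c < sigma) \sum_(w <- W) br w c)%N.
  by apply: eq_bigr => c _; rewrite -runs_regroup.
rewrite natr_sum.
apply: (@le_trans _ _ (\sum_(c < sigma) \sum_(w <- W) ((size T)%:R * (xlog (size T) (a w c) (b w) + xlog (size T) (b w - a w c)%N (b w)) + ((a w c == b w) * br w c)%N%:R : R))%R).
  apply: ler_sum => c _; rewrite natr_sum; apply: ler_sum => w _.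
  apply: wc_bound.
  - exact: n_gt0.
  - by rewrite (b_split w c) leq_addr.
  - exact: br_le_a.
  - exact: br_le_b.
rewrite [X in (X <= _)%R](_ : _ = (\sum_(c < sigma) \sum_(w <- W) ((size T)%:R * (xlog (size T) (a w c) (b w) + xlog (size T) (b w - a w c)%N (b w))) + \sum_(c < sigma) (C c)%:R : R)%R); last first.
  rewrite -big_split /=; apply: eq_bigr => c _.
  by rewrite C_regroup natr_sum -big_split.
apply: lerD.
  rewrite /Hk mulr_sumr exchange_big /=; apply: ler_sum => w _.
  by rewrite mulr_sumr.
by rewrite -natr_sum ler_nat; exact: sumC.
Qed.

End Main.

Unset Implicit Arguments.
Local Open Scope ring_scope.

Theorem corollary6 (R : realType) (sigma : nat) (T : seq (seq 'I_sigma)) (k : nat) :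
  is_trie T ->
  ((xbwt_runs T)%:R : R) <= (size T)%:R * Hk T k + (sigma ^ k.+1)%:R.
Proof.
move=> HT; exact: (@final sigma T k HT R).
Qed.
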